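(* Let $\mathcal Y$ be a finite set, $\mathcal W\subseteq\mathbb{R}^D$ a convex set, $f_i:\mathcal Y\times\mathbb{R}^D\to\mathbb{R}$ ($i=1,\dots,n$) functions convex and differentiable in $w$ with Lipschitz continuous gradients, and $r:\mathbb{R}^D\to\mathbb{R}$ strongly convex and differentiable with Lipschitz continuous gradient, such that each $g_i(w):=r(w)+\max_{y\in\mathcal Y}f_i(y,w)$ is $\mu$-strongly convex on $\mathcal W$. Suppose there exists $w_0\in\mathcal W$ with $g_i(w_0)=0$ for all $i$, and let $$\Delta=\max_{w,i,j,y}\big|\partial_j[r(w)+f_i(y,w)]\big|,$$ where the maximum ranges over all indices $i$, all $y\in\mathcal Y$, all $w\in\mathcal W$ and all coordinates $j$ of $w$. Then: (a) for any $w_1,w_2\in\mathcal W$, $\|w_1-w_2\|\le\frac{2\sqrt D\,\Delta}{\mu}$; (b) for any index $i$ and any $w\in\mathcal W$, $|g_i(w)|\le\frac{2D\Delta^2}{\mu}$.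
   Context: $\partial_j$ denotes the partial derivative with respect to the $j$-th coordinate of $w$. *)

(* Defs.v *)
From HB Require Import structures.
From mathcomp Require Import all_boot all_order all_algebra.
From mathcomp Require Import all_classical all_reals all_analysis.
Set Implicit Arguments. Unset Strict Implicit. Unset Printing Implicit Defensive.
Import Order.TTheory GRing.Theory Num.Theory.
Import numFieldNormedType.Exports.
Local Open Scope classical_set_scope.
Local Open Scope ring_scope.

(* Euclidean norm on R^D (the library's default norm on row vectors is the sup norm) *)
Definition enorm (R : realType) (D : nat) (v : 'rV[R]_D) : R :=
  Num.sqrt (\sum_(j < D) v ord0 j ^+ 2).

Definition ebasis (R : realType) (D : nat) (j : 'I_D) : 'rV[R]_D := delta_mx ord0 j.

Definition partial (R : realType) (D : nat) (j : 'I_D) (f : 'rV[R]_D -> R)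
  (w : 'rV[R]_D) : R := derive f w (ebasis R j).

Definition grad (R : realType) (D : nat) (f : 'rV[R]_D -> R) (w : 'rV[R]_D)
  : 'rV[R]_D := \row_j partial j f w.

Definition lipschitz_grad (R : realType) (D : nat) (f : 'rV[R]_D -> R) : Prop :=
  exists L : R, forall x y : 'rV[R]_D,
    enorm (grad f x - grad f y) <= L * enorm (x - y).

Definition differentiable_everywhere (R : realType) (D : nat)
  (f : 'rV[R]_D -> R) : Prop := forall w, differentiable f w.

Definition convex_subset (R : realType) (D : nat) (A : set 'rV[R]_D) : Prop :=
  forall x y t, A x -> A y -> 0 <= t <= 1 -> A (t *: x + (1 - t) *: y).

Definition strongly_convex_on (R : realType) (D : nat) (A : set 'rV[R]_D)
  (m : R) (g : 'rV[R]_D -> R) : Prop :=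
  forall x y t, A x -> A y -> 0 <= t <= 1 ->
    g (t *: x + (1 - t) *: y) <=
      t * g x + (1 - t) * g y - m / 2 * t * (1 - t) * enorm (x - y) ^+ 2.

Definition convex_fun (R : realType) (D : nat) (g : 'rV[R]_D -> R) : Prop :=
  strongly_convex_on setT 0 g.

(* maximum over a nonempty finite type Y (y0 witnesses nonemptiness; the value
   does not depend on y0) *)
Definition fmax (R : realType) (Y : finType) (y0 : Y) (h : Y -> R) : R :=
  \big[Num.max/h y0]_(y : Y) h y.

(* Main.v *)
Require Import Defs.
From HB Require Import structures.
From mathcomp Require Import all_boot all_order all_algebra.
From mathcomp Require Import all_classical all_reals all_analysis.
From mathcomp Require Import ring lra.
Import Order.TTheory GRing.Theory Num.Theory.
Import numFieldNormedType.Exports.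
Local Open Scope classical_set_scope.
Local Open Scope ring_scope.

Lemma conv_deriv (R : realType) (D : nat) (h : 'rV[R]_D -> R) x z :
  convex_fun h -> differentiable h z -> derive h z (x - z) <= h x - h z.
Proof.
move=> hc dz.
have dv : derivable h z (x - z) := diff_derivable dz.
set q := (fun t : R => t^-1 *: ((h \o shift z) (t *: (x - z)) - h z)).
have cv : q t @[t --> 0^'+] --> derive h z (x - z).
  apply: cvg_trans; last exact: dv.
  apply: cvg_app; apply: within_subset => t /= t0; by rewrite gt_eqF.
rewrite (_ : derive h z (x - z) = lim (q t @[t --> 0^'+])); last first.
  by apply/esym/cvg_lim.
apply: limr_le; first by apply/cvg_ex; eexists; exact: cv.
near=> t.
have t0 : 0 < t by near: t; exact: nbhs_right_gt.
have t1 : t <= 1 by near: t; apply: nbhs_right_le.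
rewrite /q /= /shift.
have := hc x z t I I.
rewrite t1 ltW //= => /(_ isT).
rewrite (_ : t *: x + (1 - t) *: z = t *: (x - z) + z); last first.
  rewrite scalerBl scale1r scalerBr. by rewrite addrCA addrC.
move=> H.
change (t^-1 * (h (t *: (x - z) + z) - h z) <= h x - h z).
rewrite ler_pdivrMl //.
set e := enorm _ in H. set a := h (_ + z) in H *.
nra.
Unshelve. all: by end_near.
Qed.

Lemma dir_deriv (R : realType) (D : nat) (h : 'rV[R]_D -> R) z v :
  differentiable h z -> derive h z v = \sum_j v ord0 j * partial j h z.
Proof.
move=> dz; rewrite deriveE //.
rewrite {1}(row_sum_delta v) linear_sum /=.
apply: eq_bigr => j _; rewrite linearZ /= /partial deriveE //.
Qed.

Lemma dir_bound (R : realType) (D : nat) (h : 'rV[R]_D -> R) z v (De : R) :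
  differentiable h z -> (forall j, `|partial j h z| <= De) ->
  `|derive h z v| <= De * \sum_j `|v ord0 j|.
Proof.
move=> dz hb; rewrite dir_deriv // mulr_sumr.
apply: le_trans (ler_norm_sum _ _ _) _.
apply: ler_sum => j _; rewrite normrM mulrC.
by apply: ler_wpM2r.
Qed.

Lemma cs_sum (R : realType) (D : nat) (a : 'I_D -> R) :
  (\sum_j a j) ^+ 2 <= D%:R * \sum_j a j ^+ 2.
Proof.
rewrite expr2 mulr_suml.
have -> : D%:R * \sum_j a j ^+ 2 = \sum_(i < D) \sum_(j < D) (a i ^+ 2 + a j ^+ 2) / 2.
  transitivity (\sum_(i < D) \sum_(j < D) (a i ^+ 2 / 2) + \sum_(i < D) \sum_(j < D) (a j ^+ 2 / 2)); last first.
    rewrite -big_split /=; apply: eq_bigr => i _; rewrite -big_split /=.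
    by apply: eq_bigr => j _; rewrite mulrDl.
  have -> : \sum_(i < D) \sum_(j < D) (a j ^+ 2 / 2) = \sum_(i < D) \sum_(j < D) (a i ^+ 2 / 2).
    by rewrite exchange_big.
  set X := \sum_(i < D) \sum_(j < D) _.
  have -> : X = (\sum_j a j ^+ 2) / 2 * D%:R.
    rewrite /X !mulr_suml; apply: eq_bigr => i _.
    by rewrite sumr_const card_ord mulr_natr.
  by rewrite -mulrDl -splitr mulrC.
apply: ler_sum => i _; rewrite mulr_sumr; apply: ler_sum => j _.
have := sqr_ge0 (a i - a j); rewrite !expr2; nra.
Qed.

Lemma l1_le (R : realType) (D : nat) (v : 'rV[R]_D) :
  \sum_j `|v ord0 j| <= Num.sqrt D%:R * enorm v.
Proof.
rewrite /enorm -sqrtrM ?ler0n //.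
rewrite -[X in X <= _]ger0_norm ?sumr_ge0 // -sqrtr_sqr.
apply: ler_wsqrtr.
have E : \sum_j `|v ord0 j| ^+ 2 = \sum_j v ord0 j ^+ 2.
  by apply: eq_bigr => j _; rewrite real_normK ?num_real.
rewrite -E; exact: (@cs_sum R D (fun j => `|v ord0 j|)).
Qed.

Lemma enormZ (R : realType) (D : nat) (t : R) (v : 'rV[R]_D) :
  enorm (t *: v) = `|t| * enorm v.
Proof.
rewrite /enorm.
under eq_bigr do rewrite mxE exprMn.
by rewrite -mulr_sumr sqrtrM ?sqr_ge0 // sqrtr_sqr.
Qed.

Lemma enormN (R : realType) (D : nat) (v : 'rV[R]_D) : enorm (- v) = enorm v.
Proof. by rewrite -scaleN1r enormZ normrN normr1 mul1r. Qed.

Lemma fmax_ge (R : realType) (Y : finType) (y0 : Y) (h : Y -> R) y :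
  h y <= fmax y0 h.
Proof.
rewrite /fmax (bigD1 y) //=.
by rewrite le_max lexx.
Qed.

Lemma fmax_le (R : realType) (Y : finType) (y0 : Y) (h : Y -> R) c :
  (forall y, h y <= c) -> fmax y0 h <= c.
Proof.
move=> hc; rewrite /fmax.
apply: (big_ind (fun x => x <= c)) => //.
by move=> a b ha hb; rewrite ge_max ha hb.
Qed.

Lemma lip_g (R : realType) (D n : nat) (Y : finType) (y0 : Y)
  (W : set 'rV[R]_D)
  (f : 'I_n -> Y -> 'rV[R]_D -> R) (r : 'rV[R]_D -> R) (Delta : R) i x z :
  (forall i y, convex_fun (f i y)) ->
  (forall i y, differentiable_everywhere (f i y)) ->
  (exists m : R, 0 < m /\ strongly_convex_on setT m r) ->
  differentiable_everywhere r ->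
  (forall i y w j, W w -> `|partial j (fun v => r v + f i y v) w| <= Delta) ->
  0 <= Delta -> W x -> W z ->
  r x + fmax y0 (fun y => f i y x) <=
  r z + fmax y0 (fun y => f i y z) + Num.sqrt D%:R * Delta * enorm (x - z).
Proof.
move=> fc fd [m [m0 rc]] rd hb D0 Wx Wz.
set K := Num.sqrt D%:R * Delta * enorm (x - z).
have hy : forall y, r x + f i y x <= r z + f i y z + K.
  move=> y; set h := fun v => r v + f i y v.
  have hc : convex_fun h.
    move=> a b t _ _ t01; rewrite /h.
    have := rc a b t I I t01; have := fc i y a b t I I t01.
    set e := enorm _; rewrite !mul0r !subr0 => H1 H2.
    have : 0 <= m / 2 * t * (1 - t) * e ^+ 2.
      case/andP: t01 => ? ?.
      apply: mulr_ge0; last exact: sqr_ge0.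
      apply: mulr_ge0; last lra.
      apply: mulr_ge0 => //; lra.
    lra.
  have hd : differentiable h x by apply: differentiableD; [exact: rd|exact: fd].
  have := @conv_deriv _ _ h z x hc hd.
  have := @dir_bound _ _ h x (z - x) Delta hd (fun j => hb i y x j Wx).
  have := @l1_le _ _ (z - x).
  rewrite -opprB enormN.
  rewrite -/(h x) -/(h z) /K.
  move=> H1 H2 H3.
  have : Delta * \sum_j `|(- (x - z)) ord0 j| <= Delta * (Num.sqrt D%:R * enorm (x - z)).
    by apply: ler_wpM2l.
  move: H2 H3; set dd := derive _ _ _ => H2 H3.
  have := ler_norm (- dd); rewrite normrN.
  rewrite mulrA [Delta * _]mulrC.
  lra.
suff : fmax y0 (fun y => f i y x) <= r z + fmax y0 (fun y => f i y z) + K - r x by lra.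
apply: fmax_le => y.
have := hy y; have := @fmax_ge _ _ y0 (fun y => f i y z) y; rewrite /=; lra.
Qed.

Theorem mainTheorem3 (R : realType) (D n : nat) (Y : finType) (y0 : Y)
  (W : set 'rV[R]_D)
  (f : 'I_n -> Y -> 'rV[R]_D -> R) (r : 'rV[R]_D -> R) (mu Delta : R) :
  convex_subset W ->
  (forall i y, convex_fun (f i y)) ->
  (forall i y, differentiable_everywhere (f i y)) ->
  (forall i y, lipschitz_grad (f i y)) ->
  (exists m : R, 0 < m /\ strongly_convex_on setT m r) ->
  differentiable_everywhere r ->
  lipschitz_grad r ->
  0 < mu ->
  (forall i, strongly_convex_on W mu (fun w => r w + fmax y0 (fun y => f i y w))) ->
  (exists w0, W w0 /\ forall i, r w0 + fmax y0 (fun y => f i y w0) = 0) ->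
  (* Delta is the maximum of |d_j [r(w) + f_i(y,w)]| over i, y, w in W, j *)
  (forall i y w j, W w -> `|partial j (fun v => r v + f i y v) w| <= Delta) ->
  (exists i y w j, W w /\ `|partial j (fun v => r v + f i y v) w| = Delta) ->
  (forall w1 w2, W w1 -> W w2 ->
     enorm (w1 - w2) <= 2 * Num.sqrt (D%:R) * Delta / mu) /\
  (forall i w, W w ->
     `|r w + fmax y0 (fun y => f i y w)| <= 2 * D%:R * Delta ^+ 2 / mu).
Proof.
move=> Wc fc fd _ rc rd _ mu0 gsc [w0 [Ww0 g0]] hb [i0 [yy [ww [jj [Www eqD]]]]].
have D0 : 0 <= Delta by rewrite -eqD.
have lip := fun i x z Wx Wz => @lip_g R D n Y y0 W f r Delta i x z fc fd rc rd hb D0 Wx Wz.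
have S0 : 0 <= Num.sqrt (D%:R : R) by apply: sqrtr_ge0.
set L := Num.sqrt D%:R * Delta in lip.
have L0 : 0 <= L by apply: mulr_ge0.
have partA : forall w1 w2, W w1 -> W w2 -> enorm (w1 - w2) <= 2 * L / mu.
  move=> w1 w2 W1 W2.
  set d := enorm (w1 - w2).
  have key : forall t, 0 < t -> t <= 1 -> mu * (1 - t) * d ^+ 2 <= 2 * L * d.
    move=> t t0 t1.
    have t01 : 0 <= t <= 1 by rewrite ltW.
    have h1 := gsc i0 w1 w2 t W1 W2 t01.
    have h2 := gsc i0 w2 w1 t W2 W1 t01.
    have Wx1 := Wc w1 w2 t W1 W2 t01.
    have Wx2 := Wc w2 w1 t W2 W1 t01.
    have l1 := lip i0 w2 _ W2 Wx1.
    have l2 := lip i0 w1 _ W1 Wx2.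
    have e1 : w2 - (t *: w1 + (1 - t) *: w2) = t *: (w2 - w1).
      by apply/rowP => j; rewrite !mxE; ring.
    have e2 : w1 - (t *: w2 + (1 - t) *: w1) = t *: (w1 - w2).
      by apply/rowP => j; rewrite !mxE; ring.
    rewrite e1 e2 !enormZ (ger0_norm (ltW t0)) in l1 l2.
    have e3 : enorm (w2 - w1) = d by rewrite -opprB enormN.
    rewrite e3 in l1 h2.
    suff : t * (mu * (1 - t) * d ^+ 2) <= t * (2 * L * d) by rewrite ler_pM2l.
    rewrite -/d in h1 l2; lra.
  rewrite leNgt; apply/negP => hlt.
  set c := 2 * L / mu in hlt.
  have c0 : 0 <= c by rewrite /c; apply: divr_ge0; [apply: mulr_ge0 | exact: ltW].
  have d0 : 0 < d by lra.
  set t := (d - c) / (2 * d).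
  have t0 : 0 < t by apply: divr_gt0; lra.
  have t1 : t <= 1.
    rewrite /t ler_pdivrMr; lra.
  have := key t t0 t1.
  have -> : mu * (1 - t) * d ^+ 2 = mu * d * ((d + c) / 2).
    rewrite /t; field; lra.
  have -> : 2 * L * d = mu * d * c.
    rewrite /c; field; lra.
  rewrite ler_pM2l; last exact: mulr_gt0.
  lra.
split.
  by move=> w1 w2 W1 W2; have := partA w1 w2 W1 W2; rewrite /L mulrA.
move=> i w Ww.
have a1 := lip i w w0 Ww Ww0.
have a2 := lip i w0 w Ww0 Ww.
rewrite g0 in a1 a2.
have e3 : enorm (w0 - w) = enorm (w - w0) by rewrite -opprB enormN.
rewrite e3 in a2.
have pa := partA w w0 Ww Ww0.
have : L * enorm (w - w0) <= L * (2 * L / mu) by apply: ler_wpM2l.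
have -> : L * (2 * L / mu) = 2 * D%:R * Delta ^+ 2 / mu.
  have sq : Num.sqrt (D%:R : R) ^+ 2 = D%:R by rewrite sqr_sqrtr ?ler0n.
  rewrite /L -[in RHS]sq; field; lra.
rewrite ler_norml.
move=> H; apply/andP; split; lra.
Qed.
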